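(* Let $(X,\tau)$ be a $\sigma$-compact Hausdorff space. The following are equivalent: (1) $X$ has the property $\textsf{S}_1(\mathcal{O},\mathcal{O})$; (2) TWO has a winning strategy in the game ${\sf G}_1(\mathcal{O},\mathcal{O})$.
   Context: $\sigma$-compact: a countable union of compact subsets. $\mathcal{O}$: open covers of $X$. $\textsf{S}_1(\mathcal{O},\mathcal{O})$: for every sequence $(\mathcal{U}_n)$ of open covers there are $U_n\in\mathcal{U}_n$ with $\{U_n:n\in\mathbb{N}\}$ covering $X$. Game ${\sf G}_1(\mathcal{O},\mathcal{O})$: in inning $n\in\mathbb{N}$ ONE chooses an open cover $O_n$ of $X$, TWO responds with $T_n\in O_n$; TWO wins if $\{T_n:n\in\mathbb{N}\}$ covers $X$, otherwise ONE wins. *)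

(* Defs.v *)
From HB Require Import structures.
From mathcomp Require Import all_boot all_order.
From mathcomp Require Import all_classical all_reals topology.
Set Implicit Arguments. Unset Strict Implicit. Unset Printing Implicit Defensive.
Local Open Scope classical_set_scope.

Definition open_cover (T : topologicalType) (U : set (set T)) : Prop :=
  (forall V, U V -> open V) /\ \bigcup_(V in U) V = setT.

Definition sigma_compact (T : topologicalType) : Prop :=
  exists K : nat -> set T, (forall n, compact (K n)) /\ \bigcup_n K n = setT.

Definition S1_OO (T : topologicalType) : Prop :=
  forall Us : nat -> set (set T), (forall n, open_cover (Us n)) ->
    exists V : nat -> set T, (forall n, Us n (V n)) /\ \bigcup_n V n = setT.

(* A strategy for TWO in G_1(O,O): given the list [:: O_0; ...; O_n] of
   ONE's moves so far, TWO answers with a set.  (TWO's own earlier moves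
   are determined by ONE's moves, so no generality is lost.) *)
Definition TWO_strategy (T : topologicalType) := seq (set (set T)) -> set T.

Definition TWO_winning (T : topologicalType) (sigma : TWO_strategy T) : Prop :=
  forall O : nat -> set (set T), (forall n, open_cover (O n)) ->
    (forall n, O n (sigma (mkseq O n.+1))) /\
    \bigcup_n sigma (mkseq O n.+1) = setT.

Definition TWO_has_winning_strategy (T : topologicalType) : Prop :=
  exists sigma : TWO_strategy T, TWO_winning sigma.

(* Main.v *)
Require Import Defs.
From HB Require Import structures.
From mathcomp Require Import all_boot all_order.
From mathcomp Require Import all_classical all_reals topology.
Set Implicit Arguments. Unset Strict Implicit.
Local Open Scope classical_set_scope.

Section Good.
Variable T : topologicalType.

Inductive GoodT : set T -> Type :=
| G0 : GoodT set0
| GS : forall (F : set T) (x : T),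
    (forall U : set T, open U -> U x -> GoodT (F `\` U)) -> GoodT F.

Definition Good (F : set T) : Prop := inhabited (GoodT F).

Definition getG (F : set T) (g : Good F) : GoodT F :=
  projT1 (cid (match g with inhabits x => ex_intro (fun _ => True) x I end)).

Lemma good0 : Good set0.
Proof. exact: inhabits G0. Qed.

Lemma good_mono (F G : set T) : Good F -> G `<=` F -> Good G.
Proof.
case=> g; elim: g G => [|F0 x h IH] G sub.
  by move: sub; rewrite subset0 => ->; exact: good0.
constructor; apply: (@GS G x) => U oU Ux; apply: getG.
by apply: (IH U oU Ux) => y [Gy nUy]; split => //; apply: sub.
Qed.

Lemma good_union (A B : set T) : Good A -> Good B -> Good (A `|` B).
Proof.
case=> g; elim: g B => [|A0 x h IH] B gB.
  by rewrite set0U.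
constructor; apply: (@GS _ x) => U oU Ux; apply: getG.
rewrite setDUl; apply: IH => //; apply: good_mono gB _; by move=> y [].
Qed.

Lemma goodN0 (F : set T) : ~ Good F -> F !=set0.
Proof.
move=> nG; apply/set0P/eqP => F0; apply: nG; rewrite F0; exact: good0.
Qed.

Lemma critical (F : set T) : compact F -> ~ Good F ->
  exists x, F x /\ forall W, nbhs x W -> ~ Good (F `&` W).
Proof.
move=> cF nG.
pose Phi := [set A : set T | exists G, Good G /\ F `\` G `<=` A].
have FPhi : Filter Phi.
  constructor.
  - by exists set0; split => //; exact: good0.
  - move=> A B [G1 [g1 s1]] [G2 [g2 s2]]; exists (G1 `|` G2); split.
      exact: good_union.
    by move=> y [Fy nG12]; split; [apply: s1|apply: s2]; split => // ?; apply: nG12; [left|right].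
  - by move=> P Q PQ [G [g s]]; exists G; split => //; apply: subset_trans PQ.
have PPhi : ProperFilter Phi.
  apply: Build_ProperFilter_ex => // P [G [g s]].
  apply: contrapT => nP; apply: nG; apply: good_mono g _ => y Fy.
  apply: contrapT => nGy; apply: nP; exists y; apply: s; by split.
have PhiF : Phi F by exists set0; split; [exact: good0| by move=> y []].
have [x [Fx clx]] := cF Phi PPhi PhiF.
exists x; split => // W Wx gW.
have PhiA : Phi (F `\` (F `&` W)) by exists (F `&` W); split.
have [y [[Fy nFWy] Wy]] := clx _ _ PhiA Wx.
by apply: nFWy.
Qed.

Lemma separate (A : set T) (x : T) : hausdorff_space T -> compact A -> ~ A x ->
  exists W, nbhs x W /\ closure W `&` A = set0.
Proof.
move=> hT cA nAx; apply: contrapT => nex.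
pose Phi := filter_from (nbhs x) (fun W => A `&` closure W).
have FPhi : Filter Phi.
  apply: filter_from_filter; first by exists setT; exact: filterT.
  move=> W1 W2 n1 n2; exists (W1 `&` W2); first exact: filterI.
  move=> y [Ay cy]; split; split => //; apply: closureS cy => z []//.
have PPhi : ProperFilter Phi.
  apply: filter_from_proper => // W nW; apply/set0P/eqP => E.
  by apply: nex; exists W; split => //; rewrite setIC.
have PhiA : Phi A by exists setT; [exact: filterT| by move=> y []].
have [a [Aa cla]] := cA Phi PPhi PhiA.
have xa : x = a.
  apply: hT => W V nW nV.
  move: nV; rewrite nbhsE => -[V0 [oV0 V0a] V0V].
  have PW : Phi (A `&` closure W) by exists W.
  have [z [[Az czW] V0z]] := cla _ _ PW (open_nbhs_nbhs (conj oV0 V0a)).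
  have [w [Ww V0w]] := czW V0 (open_nbhs_nbhs (conj oV0 V0z)).
  by exists w; split => //; apply: V0V.
by apply: nAx; rewrite xa.
Qed.


Lemma notGood_split (F : set T) (x : T) : ~ Good F ->
  exists U, [/\ open U, U x & ~ Good (F `\` U)].
Proof.
move=> nG; apply: contrapT => H; apply: nG; constructor.
apply: (@GS F x) => U oU Ux; apply: getG; apply: contrapT => nG'.
by apply: H; exists U.
Qed.

Definition Psplit (F : set T) (AB : set T * set T) :=
  [/\ compact AB.1, compact AB.2, ~ Good AB.1 & ~ Good AB.2] /\
  [/\ AB.1 `<=` F, AB.2 `<=` F & AB.1 `&` AB.2 = set0].

Lemma split_ex (F : set T) : hausdorff_space T -> compact F -> ~ Good F ->
  exists AB, Psplit F AB.
Proof.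
move=> hT cF nG.
have [x [Fx crit]] := critical cF nG.
have [U [oU Ux nGA]] := notGood_split x nG.
have cA : compact (F `\` U) by rewrite setDE; apply: compact_closedI => //; exact: open_closedC.
have [W [nW WA]] := separate hT cA (fun h => h.2 Ux).
exists (F `\` U, F `&` closure W); split; split.
- exact: cA.
- by apply: compact_closedI => //; exact: closed_closure.
- exact: nGA.
- move=> gB; apply: (crit W nW); apply: good_mono gB _.
  by move=> y [Fy Wy]; split => //; apply: subset_closure.
- by move=> y [].
- by move=> y [].
- rewrite -subset0 -WA => y [[Fy nUy] [_ cy]]; split => //.
Qed.

Definition sp (F : set T) : set T * set T :=
  match pselect (exists AB, Psplit F AB) with
  | left e => proj1_sig (cid e)
  | right _ => (F, F)
  end.

Lemma sp_sub (F : set T) : (sp F).1 `<=` F /\ (sp F).2 `<=` F.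
Proof.
rewrite /sp; case: pselect => [e|_]; last by split.
by have [_ [? ? _]] := proj2_sig (cid e); split.
Qed.

Lemma sp_P (F : set T) : hausdorff_space T -> compact F -> ~ Good F ->
  Psplit F (sp F).
Proof.
move=> hT cF nG; rewrite /sp; case: pselect => [e|ne].
  exact: (proj2_sig (cid e)).
by exfalso; apply: ne; apply: split_ex.
Qed.

Section Scheme.
Variable K : set T.

Fixpoint C (s : seq bool) : set T :=
  match s with
  | [::] => K
  | b :: s' => if b then (sp (C s')).1 else (sp (C s')).2
  end.

Fixpoint D (s : seq bool) : set T :=
  match s with
  | [::] => set0
  | b :: s' => D s' `|` C (~~ b :: s')
  end.

Lemma C_sub b s : C (b :: s) `<=` C s.
Proof. by case: b => /=; case: (sp_sub (C s)). Qed.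

Hypothesis hT : hausdorff_space T.
Hypothesis cK : compact K.
Hypothesis nGK : ~ Good K.

Lemma C_inv s : compact (C s) /\ ~ Good (C s).
Proof.
elim: s => [|b s [cs ns]] //=.
by have [[c1 c2 n1 n2] _] := sp_P hT cs ns; case: b.
Qed.

Lemma C_disj s : C (true :: s) `&` C (false :: s) = set0.
Proof.
have [cs ns] := C_inv s.
by have [_ [_ _ ->]] := sp_P hT cs ns.
Qed.

Lemma C_closed s : closed (C s).
Proof. by apply: compact_closed => //; case: (C_inv s). Qed.

Lemma D_closed s : closed (D s).
Proof.
elim: s => [|b s IH]; first exact: closed0.
exact: (closedU IH (@C_closed (~~ b :: s))).
Qed.

Lemma CD s t : size s = size t -> s <> t -> C t `<=` D s.
Proof.
elim: s t => [|a s IH] [|c t] //= [st] neq.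
have [est|nst] := pselect (s = t).
  subst t.
  have -> : c = ~~ a by case: a c neq => [] [] // /(_ erefl) [].
  by move=> y ?; right.
by move=> y /C_sub /(IH t st nst) ?; left.
Qed.

Lemma D_cover n y : exists s, size s = n /\ ~ D s y.
Proof.
elim: n => [|n [s [ss nD]]]; first by exists [::]; split => //; case.
have [Cty|nCty] := pselect (C (true :: s) y).
  exists (true :: s); split; first by rewrite /= ss.
  move=> /= [//|Cfy].
  have : (C (true :: s) `&` C (false :: s)) y by split.
  by rewrite C_disj.
exists (false :: s); split; first by rewrite /= ss.
by move=> /= [].
Qed.

End Scheme.

Lemma nested (Cn : nat -> set T) : hausdorff_space T ->
  (forall n, compact (Cn n)) -> (forall n, Cn n !=set0) ->
  (forall n, Cn n.+1 `<=` Cn n) -> exists y, forall n, Cn n y.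
Proof.
move=> hT cC neC dC.
have decr i k : (i <= k)%N -> Cn k `<=` Cn i.
  elim: k => [|k IH]; first by rewrite leqn0 => /eqP ->.
  rewrite leq_eqVlt => /orP [/eqP ->//|]; rewrite ltnS => /IH.
  by apply: subset_trans.
pose Phi := filter_from [set: nat] Cn.
have FPhi : Filter Phi.
  apply: filter_from_filter; first by exists 0%N.
  move=> i j _ _; exists (maxn i j) => //.
  by move=> y Cy; split; apply: (decr _ (maxn i j)) => //; rewrite ?leq_maxl ?leq_maxr.
have PPhi : ProperFilter Phi by apply: filter_from_proper.
have PhiC0 : Phi (Cn 0%N) by exists 0%N.
have [y [_ cly]] := cC 0%N Phi PPhi PhiC0.
exists y => n; apply: (compact_closed hT (cC n)) => B nB.
by apply: cly => //; exists n.
Qed.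

Fixpoint branch (sf : nat -> seq bool) (n : nat) : seq bool :=
  match n with
  | 0 => [::]
  | n'.+1 => ~~ head true (sf n') :: branch sf n'
  end.

Lemma size_branch sf n : size (branch sf n) = n.
Proof. by elim: n => //= n ->. Qed.

Lemma notS1 (K : set T) : hausdorff_space T -> compact K -> ~ Good K -> ~ S1_OO T.
Proof.
move=> hT cK nGK S1.
pose Us n := [set W | exists s, size s = n.+1 /\ W = ~` D K s].
have covU n : open_cover (Us n).
  split.
    by move=> W [s [_ ->]]; rewrite openC; apply: D_closed.
  apply/seteqP; split => // y _.
  have [s [ss nD]] := @D_cover K hT cK nGK n.+1 y.
  by exists (~` D K s) => //; exists s.
have [V [UV cov]] := S1 Us covU.
have /choice [sf Hs] : forall n, exists s, size s = n.+1 /\ V n = ~` D K s.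
  by move=> n; have [s ?] := UV n; exists s.
have [y Cy] := @nested (fun n => C K (branch sf n)) hT
  (fun n => (@C_inv K hT cK nGK _).1)
  (fun n => goodN0 (@C_inv K hT cK nGK _).2)
  (fun n => @C_sub K _ _).
have : [set: T] y by [].
rewrite -cov => -[n _ Vy].
have [ss Vn] := Hs n.
move: Vy; rewrite Vn; apply.
apply: (@CD K (sf n) (branch sf n.+1) _ _ y (Cy n.+1)).
- by rewrite size_branch.
- rewrite /=; case: (sf n) ss => // a t _ [].
  by case: a.
Qed.


Section Strat.
Variable K : nat -> set T.
Variable gK : forall m, GoodT (K m).
Variable pick : set (set T) -> set T.

Definition state := (nat * {F : set T & GoodT F})%type.

Definition step (st : state) (O : set (set T)) : set T * state :=
  let: (m, existT F g) := st in
  match g with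
  | G0 => (pick O, (m.+1, existT _ (K m) (gK m)))
  | GS F x h =>
    match pselect (exists U, O U /\ open U /\ U x) with
    | left e =>
      (proj1_sig (cid e),
       (m, existT _ (F `\` proj1_sig (cid e))
             (h (proj1_sig (cid e)) (proj1 (proj2 (proj2_sig (cid e))))
                (proj2 (proj2 (proj2_sig (cid e)))))))
    | right _ => (pick O, (m, existT _ set0 G0))
    end
  end.

Definition init : state := (0%N, existT _ set0 G0).
Definition run (l : seq (set (set T))) : state :=
  foldl (fun s O => (step s O).2) init l.
Definition strat (l : seq (set (set T))) : set T :=
  match rev l with
  | [::] => set0
  | o :: r => (step (run (rev r)) o).1
  end.

Lemma strat_mkseq (O : nat -> set (set T)) n :
  strat (mkseq O n.+1) = (step (run (mkseq O n)) (O n)).1.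
Proof. by rewrite /strat mkseqS rev_rcons revK. Qed.

Lemma run_mkseqS (O : nat -> set (set T)) n :
  run (mkseq O n.+1) = (step (run (mkseq O n)) (O n)).2.
Proof. by rewrite /run mkseqS foldl_rcons. Qed.

Lemma step_legal (st : state) (O : set (set T)) :
  O (pick O) -> O ((step st O).1).
Proof.
move=> pO; case: st => m [F g]; case: g => [|F0 x h] //=.
case: pselect => [e|_] //=.
by have [] := proj2_sig (cid e).
Qed.

Section Play.
Variable O : nat -> set (set T).
Hypothesis cO : forall n, open_cover (O n).

Definition st n := run (mkseq O n).
Definition ans n := (step (st n) (O n)).1.

Lemma stS n : st n.+1 = (step (st n) (O n)).2.
Proof. exact: run_mkseqS. Qed.

Lemma phase F (g : GoodT F) : forall n m, st n = (m, existT _ F g) ->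
  exists j, (n <= j)%N /\ st j.+1 = (m.+1, existT _ (K m) (gK m)) /\
    F `<=` \bigcup_(k in [set k | (n <= k <= j)%N]) ans k.
Proof.
elim: g => [|F0 x h IH] n m e.
  exists n; split => //; split; last by move=> y [].
  by rewrite stS e.
have ex : exists U, O n U /\ open U /\ U x.
  have : [set: T] x by [].
  rewrite -(cO n).2 => -[U OU Ux]; exists U; split => //; split => //.
  exact: (cO n).1.
have Hstep : step (st n) (O n) = step (m, existT _ F0 (GS h)) (O n) by rewrite e.
move: Hstep; rewrite /=; case: pselect => [e'|ne] Hstep; last by exfalso.
have := IH _ (proj1 (proj2 (proj2_sig (cid e'))))
    (proj2 (proj2 (proj2_sig (cid e')))) n.+1 m.
rewrite [st n.+1]stS Hstep => /(_ erefl) [j [nj [stj cov]]].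
exists j; split; first exact: ltnW.
split => // y F0y.
have [Uy|nUy] := pselect (proj1_sig (cid e') y).
  exists n; first by rewrite /= leqnn; exact: ltnW.
  by rewrite /ans Hstep.
have [k /andP [nk kj] ak] := cov y (conj F0y nUy).
by exists k => //=; rewrite (ltnW nk) kj.
Qed.

Lemma phases m : exists n, st n = (m.+1, existT _ (K m) (gK m)).
Proof.
elim: m => [|m [n e]]; first by exists 1%N.
have [j [_ [e' _]]] := phase e.
by exists j.+1.
Qed.

Lemma strat_covers : \bigcup_n ans n = [set: T] ->
  \bigcup_n strat (mkseq O n.+1) = [set: T].
Proof. by move=> <-; apply: eq_bigcupr => n _; rewrite strat_mkseq. Qed.

Lemma ans_cover (covK : \bigcup_m K m = [set: T]) : \bigcup_n ans n = [set: T].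
Proof.
apply/seteqP; split => // y _.
have : [set: T] y by [].
rewrite -covK => -[m _ Kmy].
have [n e] := phases m.
have [j [_ [_ cov]]] := phase e.
by have [k _ ak] := cov y Kmy; exists k.
Qed.

End Play.
End Strat.

End Good.

Unset Implicit Arguments.

Theorem theorem8p5 (T : topologicalType) :
  hausdorff_space T -> sigma_compact T ->
  (S1_OO T <-> TWO_has_winning_strategy T).
Proof.
move=> hT [K [cK covK]]; split.
- move=> S1.
  have GK m : Good (K m).
    by apply: contrapT => nG; exact: (notS1 hT (cK m) nG S1).
  pose gK m := getG (GK m).
  pose pick (o : set (set T)) :=
    match pselect (exists U, o U) with
    | left e => proj1_sig (cid e)
    | right _ => set0
    end.
  have pickP o : open_cover o -> o (pick o).
    move=> co; rewrite /pick; case: pselect => [e|ne].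
      exact: (proj2_sig (cid e)).
    exfalso; have [V [oV _]] := S1 (fun _ => o) (fun _ => co).
    by apply: ne; exists (V 0%N); exact: oV.
  exists (strat gK pick) => O cO; split.
    by move=> n; rewrite strat_mkseq; apply: step_legal; apply: pickP; exact: cO.
  by apply: strat_covers; exact: ans_cover.
- move=> [sigma win] Us cU; have [leg cov] := win Us cU.
  by exists (fun n => sigma (mkseq Us n.+1)); split.
Qed.
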